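(* Let $n\ge 5$ be an integer and let $\mathcal{H}$ be a Berge-$K_4$-saturated $3$-graph on $n$ vertices with the minimum number of hyperedges (among all such $3$-graphs on $n$ vertices). Suppose there is a vertex $v_1\in V(\mathcal{H})$ with $d_{\mathcal{H}}(v_1)=3$ such that every pair $(v_i,v_j)\in N^d_{\mathcal{H}}(v_1)$ is good and the pair $(v_1,v_k)$ is good for every $v_k\in N_{\mathcal{H}}(v_1)$. Then there exist four vertices $v_2,v_3,v_4,v_5$ such that $\mathcal{H}[\{v_1,v_2,v_3,v_4,v_5\}]$ contains a copy of $\mathcal{C}^3_5$.
   Context: A $3$-graph has all hyperedges of size $3$. A $3$-graph contains a Berge-$K_4$ if there are $4$ distinct vertices and $6$ distinct hyperedges, one containing each of the $6$ pairs of these vertices. $\mathcal{H}$ is Berge-$K_4$-saturated if it contains no Berge-$K_4$ but adding any $3$-set not already a hyperedge creates a Berge-$K_4$. For distinct vertices $u,v$, the pair $(u,v)$ is good if there exist distinct vertices $x,y\notin\{u,v\}$ and five distinct hyperedges of $\mathcal{H}$ containing respectively $\{u,x\},\{u,y\},\{v,x\},\{v,y\},\{x,y\}$; otherwise it is bad. $d_{\mathcal{H}}(v)$ is the number of hyperedges containing $v$; $N^d_{\mathcal{H}}(v)=\{(v_i,v_j): vv_iv_j\in E(\mathcal{H})\}$; $N_{\mathcal{H}}(v)$ is the set of vertices $w\neq v$ lying in a common hyperedge with $v$. $\mathcal{C}^3_5$ is the tight $3$-uniform $5$-cycle with vertices $w_1,\dots,w_5$ and hyperedges $w_iw_{i+1}w_{i+2}$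 ($i\in\{1,\dots,5\}$, indices mod $5$). *)

(* Defs.v *)
From mathcomp Require Import all_boot.
Set Implicit Arguments. Unset Strict Implicit. Unset Printing Implicit Defensive.

Section Hyper.
Variable T : finType.
Implicit Types (H : {set {set T}}) (u v x y : T).

Definition is_3graph H : Prop := forall e, e \in H -> #|e| = 3.

Definition pairs_of (S : {set T}) : {set {set T}} :=
  [set p : {set T} | (p \subset S) && (#|p| == 2)].

(* Berge-K4: 4 distinct vertices and 6 distinct hyperedges, one containing
   each of the 6 pairs of these vertices (an injective assignment). *)
Definition has_berge_K4 H : Prop :=
  exists S : {set T}, #|S| = 4 /\
    exists f : {set T} -> {set T},
      {in pairs_of S &, injective f} /\
      (forall p, p \in pairs_of S -> f p \in H /\ p \subset f p).

Definition berge_K4_saturated H : Prop :=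
  is_3graph H /\ ~ has_berge_K4 H /\
  (forall e : {set T}, #|e| = 3 -> e \notin H -> has_berge_K4 (e |: H)).

Definition good_pair H u v : Prop :=
  u != v /\
  exists x y, [/\ x != y, x \notin [set u; v], y \notin [set u; v] &
   exists e1 e2 e3 e4 e5 : {set T},
     [/\ uniq [:: e1; e2; e3; e4; e5],
         [&& e1 \in H, e2 \in H, e3 \in H, e4 \in H & e5 \in H] &
         [&& [set u; x] \subset e1, [set u; y] \subset e2,
             [set v; x] \subset e3, [set v; y] \subset e4 &
             [set x; y] \subset e5]]].

Definition hdeg H v : nat := #|[set e in H | v \in e]|.

Definition in_Nd H v vi vj : Prop :=
  [/\ vi != vj, vi != v, vj != v & [set v; vi; vj] \in H].

Definition in_N H v w : Prop :=
  w != v /\ exists2 e, e \in H & (v \in e) && (w \in e).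

Definition contains_C35_on H (S : {set T}) : Prop :=
  exists w1 w2 w3 w4 w5 : T,
    [/\ uniq [:: w1; w2; w3; w4; w5],
        [set w1; w2; w3; w4; w5] = S &
        [&& [set w1; w2; w3] \in H, [set w2; w3; w4] \in H,
            [set w3; w4; w5] \in H, [set w4; w5; w1] \in H &
            [set w5; w1; w2] \in H]].
End Hyper.

(* Main.v *)
Require Import Defs.
From mathcomp Require Import all_boot.
Set Implicit Arguments. Unset Strict Implicit. Unset Printing Implicit Defensive.

Section Basic.
Variable T : finType.

Lemma set3_card (a b c : T) : a != b -> a != c -> b != c -> #|[set a; b; c]| = 3.
Proof.
move=> ab ac bc.
have -> : [set a; b; c] = [set x in [:: a; b; c]].
  by apply/setP=> z; rewrite !inE orbA.
rewrite cardsE; apply/card_uniqP => /=.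
by rewrite !inE negb_or ab ac bc.
Qed.

Lemma set4_card (a b c d : T) : uniq [:: a; b; c; d] -> #|[set a; b; c; d]| = 4.
Proof.
move=> u.
have -> : [set a; b; c; d] = [set x in [:: a; b; c; d]].
  by apply/setP=> z; rewrite !inE !orbA.
by rewrite cardsE; apply/card_uniqP.
Qed.

Lemma card3_eq (e : {set T}) a b c : #|e| = 3 -> a \in e -> b \in e -> c \in e ->
  a != b -> a != c -> b != c -> e = [set a; b; c].
Proof.
move=> ce ae be ce' ab ac bc; apply/esym/eqP; rewrite eqEcard ce set3_card //.
rewrite leqnn andbT; apply/subsetP=> z; rewrite !inE.
by case/orP=> [/orP[]|] /eqP->.
Qed.

Lemma card3_split (e : {set T}) u : #|e| = 3 -> u \in e ->
  exists a b, [/\ a != b, a != u, b != u & e = [set u; a; b]].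
Proof.
move=> ce ue.
have : #|e :\ u| == 2 by move: ce; rewrite (cardsD1 u e) ue add1n; case=> ->.
case/cards2P=> a [b [ab eab]].
have ae : a \in e :\ u by rewrite eab !inE eqxx.
have be : b \in e :\ u by rewrite eab !inE eqxx orbT.
move: ae be; rewrite !inE => /andP[au ae] /andP[bu be].
exists a, b; split => //.
by apply: card3_eq => //; rewrite ?setU11 // eq_sym.
Qed.

Lemma card3_split2 (e : {set T}) u v : #|e| = 3 -> u \in e -> v \in e -> u != v ->
  exists w, [/\ w != u, w != v & e = [set u; v; w]].
Proof.
move=> ce ue ve uv.
case: (card3_split ce ue) => a [b [ab au bu ee]].
move: ve; rewrite ee !inE eq_sym (negbTE uv) /= => /orP[] /eqP vE.
  exists b; split => //; first by rewrite vE eq_sym.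
  by rewrite vE.
exists a; split => //; first by rewrite vE.
by rewrite vE; apply/setP=> z; rewrite !inE; case: (z == u); case: (z == a); case: (z == b).
Qed.

Lemma set3_perm (a b c : T) : [set a; b; c] = [set b; a; c] /\ [set a; b; c] = [set a; c; b]
  /\ [set a; b; c] = [set c; a; b] /\ [set a;b;c] = [set b; c; a] /\ [set a;b;c] = [set c;b;a].
Proof.
by split; [|split; [|split; [|split]]]; apply/setP=> z; rewrite !inE;
  case: (z == a); case: (z == b); case: (z == c).
Qed.

End Basic.

Section K4.
Variable T : finType.
Variable H : {set {set T}}.

Lemma pair_in (a b c d : T) (p : {set T}) : uniq [:: a; b; c; d] ->
  p \in pairs_of [set a; b; c; d] ->
  p \in [:: [set a; b]; [set a; c]; [set a; d]; [set b; c]; [set b; d]; [set c; d]].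
Proof.
move=> u; rewrite inE => /andP[sp /cards2P [x [y [xy pE]]]].
have xS : x \in [set a; b; c; d] by apply: (subsetP sp); rewrite pE !inE eqxx.
have yS : y \in [set a; b; c; d] by apply: (subsetP sp); rewrite pE !inE eqxx orbT.
move: xS yS xy; rewrite pE !inE -!orbA.
by case/or4P=> /eqP-> /or4P[] /eqP-> //; rewrite ?eqxx // => _;
  rewrite ?eqxx ?orbT //= setUC ?eqxx ?orbT.
Qed.

Lemma mk_K4 (a b c d : T) (Eab Eac Ead Ebc Ebd Ecd : {set T}) :
  uniq [:: a; b; c; d] ->
  uniq [:: Eab; Eac; Ead; Ebc; Ebd; Ecd] ->
  Eab \in H -> Eac \in H -> Ead \in H -> Ebc \in H -> Ebd \in H -> Ecd \in H ->
  [set a; b] \subset Eab -> [set a; c] \subset Eac -> [set a; d] \subset Ead ->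
  [set b; c] \subset Ebc -> [set b; d] \subset Ebd -> [set c; d] \subset Ecd ->
  has_berge_K4 H.
Proof.
move=> u uE h1 h2 h3 h4 h5 h6 s1 s2 s3 s4 s5 s6.
set P := [:: [set a; b]; [set a; c]; [set a; d]; [set b; c]; [set b; d]; [set c; d]].
set E := [:: Eab; Eac; Ead; Ebc; Ebd; Ecd].
exists [set a; b; c; d]; split; first exact: set4_card.
exists (fun p => nth set0 E (index p P)); split.
  move=> p1 p2 /(pair_in u) p1P /(pair_in u) p2P /eqP.
  rewrite nth_uniq // ?index_mem // => /eqP ei.
  by rewrite -(nth_index set0 p1P) -(nth_index set0 p2P) ei.
move=> p /(pair_in u) pP.
have : index p P < 6 by rewrite -/(size P) index_mem.
rewrite -{3}(nth_index set0 pP).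
by case: (index p P) => [|[|[|[|[|[|]]]]]].
Qed.
End K4.

Section Good.
Variable T : finType.
Variable H : {set {set T}}.
Hypothesis hK : ~ has_berge_K4 H.

Lemma sub2 (x y : T) (e : {set T}) : ([set x; y] \subset e) = (x \in e) && (y \in e).
Proof. by rewrite subUset !sub1set. Qed.

Definition wit (u v x y : T) (e1 e2 e3 e4 e5 : {set T}) :=
  [/\ x != y, x \notin [set u; v], y \notin [set u; v],
     uniq [:: e1; e2; e3; e4; e5] &
     [/\ [&& e1 \in H, e2 \in H, e3 \in H, e4 \in H & e5 \in H],
         [&& u \in e1, x \in e1, u \in e2 & y \in e2],
         [&& v \in e3, x \in e3, v \in e4 & y \in e4] &
         (x \in e5) && (y \in e5)]].

Lemma wit_swap u v x y e1 e2 e3 e4 e5 : wit u v x y e1 e2 e3 e4 e5 ->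
  wit u v y x e2 e1 e4 e3 e5.
Proof.
case=> xy xn yn un [/and5P[h1 h2 h3 h4 h5] /and4P[a1 a2 a3 a4] /and4P[b1 b2 b3 b4] /andP[c1 c2]].
split; rewrite ?(eq_sym y) //.
  move: un => /= /and5P[u1 u2 u3 u4 _]; move: u1 u2 u3 u4.
  rewrite !in_cons !in_nil !orbF !negb_or => /and4P[n12 n13 n14 n15] /and3P[n23 n24 n25] /andP[n34 n35] n45.
  by rewrite eq_sym n12 n14 n13 n15 n24 (eq_sym e4) n34 n45 n23 n25 n35.
by split; rewrite ?h1 ?h2 ?h3 ?h4 ?h5 ?a1 ?a2 ?a3 ?a4 ?b1 ?b2 ?b3 ?b4 ?c1 ?c2.
Qed.

Lemma good_unpack u v : good_pair H u v -> u != v /\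
  exists x y e1 e2 e3 e4 e5, wit u v x y e1 e2 e3 e4 e5 /\
   (forall e, e \in H -> u \in e -> v \in e -> e \in [:: e1; e2; e3; e4; e5]).
Proof.
case=> uv [x [y [xy xn yn [e1 [e2 [e3 [e4 [e5 [un /and5P[h1 h2 h3 h4 h5]
   /and5P[s1 s2 s3 s4 s5]]]]]]]]]].
move: s1 s2 s3 s4 s5; rewrite !sub2 => /andP[a1 a2] /andP[a3 a4] /andP[b1 b2] /andP[b3 b4] /andP[c1 c2].
split => //; exists x, y, e1, e2, e3, e4, e5; split.
  by split => //; split; rewrite ?h1 ?h2 ?h3 ?h4 ?h5 ?a1 ?a2 ?a3 ?a4 ?b1 ?b2 ?b3 ?b4 ?c1 ?c2.
move=> e he ue ve; apply/negPn/negP => en; apply: hK.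
apply: (@mk_K4 _ _ u v x y e e1 e2 e3 e4 e5) => //; rewrite ?sub2 ?ue ?ve ?a1 ?a2 ?a3 ?a4 ?b1 ?b2 ?b3 ?b4 ?c1 ?c2 //.
  move: xn yn; rewrite /= !inE !negb_or => /andP[xu xv] /andP[yu yv].
  by rewrite uv eq_sym xu eq_sym yu eq_sym xv eq_sym yv xy.
by rewrite /= en.
Qed.

Lemma third_in u v x y e1 e2 e3 e4 e5 z : wit u v x y e1 e2 e3 e4 e5 ->
  [set u; v; z] \in [:: e1; e2; e3; e4; e5] -> z = x \/ z = y.
Proof.
case=> xy xn yn un [_ /and4P[a1 a2 a3 a4] /and4P[b1 b2 b3 b4] /andP[c1 c2]].
move: xn yn; rewrite !inE !negb_or => /andP[xu xv] /andP[yu yv].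
have key : forall w, w \in [set u; v; z] -> w != u -> w != v -> z = w.
  by move=> w; rewrite !inE => /orP[/orP[]|] /eqP -> //; rewrite eqxx.
case/orP=> [/eqP E|/orP[/eqP E|/orP[/eqP E|/orP[/eqP E|/eqP E]]]].
- by left; apply: key; rewrite // E.
- by right; apply: key; rewrite // E.
- by left; apply: key; rewrite // E.
- by right; apply: key; rewrite // E.
- have kx := key x; have ky := key y; rewrite E in kx ky.
  have e1' := kx c1 xu xv; have e2' := ky c2 yu yv.
  by move: xy; rewrite -e1' -e2' eqxx.
Qed.

End Good.

Ltac neq_solve := rewrite /= ?in_cons ?in_nil ?orbF ?negb_or ?andbT;
  repeat (apply/andP; split); by [| rewrite eq_sym].

Lemma uniq5P (T : eqType) (a b c d e : T) : uniq [:: a; b; c; d; e] ->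
  [/\ a != b, a != c, a != d, a != e &
   [/\ b != c, b != d, b != e & [/\ c != d, c != e & d != e]]].
Proof.
rewrite /= !in_cons !in_nil !orbF !negb_or.
by case/and5P=> /and4P[? ? ? ?] /and3P[? ? ?] /andP[? ?] ? _.
Qed.

Section V.
Variable T : finType.
Variable H : {set {set T}}.
Hypothesis hK : ~ has_berge_K4 H.
Variable v1 : T.
Hypothesis hd : #|[set e in H | v1 \in e]| = 3.

Lemma four_V e1 e2 e3 e4 : uniq [:: e1; e2; e3; e4] ->
  e1 \in H -> e2 \in H -> e3 \in H -> e4 \in H ->
  v1 \in e1 -> v1 \in e2 -> v1 \in e3 -> v1 \in e4 -> False.
Proof.
move=> u h1 h2 h3 h4 i1 i2 i3 i4.
have : size [:: e1; e2; e3; e4] <= size (enum [set e in H | v1 \in e]).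
  apply: (uniq_leq_size u) => e; rewrite mem_enum !in_cons in_nil orbF inE.
  by case/or4P=> /eqP->; apply/andP; split.
by rewrite -cardE hd.
Qed.

Lemma link_lemma u v : good_pair H u v -> [set v1; u; v] \in H -> u != v1 -> v != v1 ->
  exists y E1 E2 E3 P Q,
  [/\ [/\ y != v1, y != u & y != v],
      [/\ E1 \in H, E2 \in H, E3 \in H, uniq [:: E1; E2; E3] & [&& v1 \in E1, v1 \in E2 & v1 \in E3]],
      [&& u \in E1, v \in E2 & y \in E3],
      [/\ P \in H, Q \in H, P != Q, v1 \notin P & v1 \notin Q] &
      [&& u \in P, y \in P, v \in Q & y \in Q]].
Proof.
move=> /(good_unpack hK) [uv [x [y [e1 [e2 [e3 [e4 [e5 [w fe]]]]]]]]] hX uv1 vv1.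
have Xin : [set u; v; v1] \in [:: e1; e2; e3; e4; e5].
  by apply: fe; rewrite ?inE ?eqxx ?orbT // -(set3_perm v1 u v).2.2.2.1.
have [y' [f1 [f2 [f3 [f4 [f5 w']]]]]] : exists y' f1 f2 f3 f4 f5,
    wit H u v v1 y' f1 f2 f3 f4 f5.
  case: (third_in w Xin) => ->; first by exists y, e1, e2, e3, e4, e5.
  by exists x, e2, e1, e4, e3, e5; apply: wit_swap.
case: w' => xy xn yn un [/and5P[h1 h2 h3 h4 h5] /and4P[a1 a2 a3 a4] /and4P[b1 b2 b3 b4] /andP[c1 c2]].
case: (uniq5P un) => n12 n13 n14 n15 [n23 n24 n25 [n34 n35 n45]].
move: yn; rewrite !inE negb_or => /andP[yu yv].
exists y', f1, f3, f5, f2, f4; split.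
- by split; rewrite // eq_sym.
- by split; rewrite // ?a2 ?b2 ?c1 //; neq_solve.
- by rewrite a1 b1 c2.
- split => //.
  + by apply/negP => i2; apply: (@four_V f1 f3 f5 f2) => //; neq_solve.
  + by apply/negP => i4; apply: (@four_V f1 f3 f5 f4) => //; neq_solve.
- by rewrite a3 a4 b3 b4.
Qed.

End V.

Section F.
Variable T : finType.
Variable H : {set {set T}}.
Hypothesis hK : ~ has_berge_K4 H.
Hypothesis h3 : is_3graph H.
Variable v1 : T.

Lemma neq_v1 (E F : {set T}) : v1 \in E -> v1 \notin F -> E != F.
Proof. by move=> i n; apply/eqP => e; move: n; rewrite -e i. Qed.

Lemma cover3 a b c Ea Eb Ec G1 G2 F :
  uniq [:: v1; a; b; c] ->
  Ea \in H -> Eb \in H -> Ec \in H -> uniq [:: Ea; Eb; Ec] ->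
  v1 \in Ea -> a \in Ea -> v1 \in Eb -> b \in Eb -> v1 \in Ec -> c \in Ec ->
  G1 \in H -> G2 \in H -> F \in H -> G1 != G2 ->
  v1 \notin G1 -> v1 \notin G2 -> v1 \notin F ->
  a \in G1 -> c \in G1 -> b \in G2 -> c \in G2 -> a \in F -> b \in F -> c \in F.
Proof.
move=> u hA hB hC uE iA aA iB bB iC cC hG1 hG2 hF G12 n1 n2 nF aG1 cG1 bG2 cG2 aF bF.
have [->|F1] := eqVneq F G1; first done.
have [->|F2] := eqVneq F G2; first done.
exfalso; apply: hK.
apply: (@mk_K4 _ _ v1 a b c Ea Eb Ec F G1 G2) => //; rewrite ?sub2 ?iA ?aA ?iB ?bB ?iC ?cC ?aF ?bF ?aG1 ?cG1 ?bG2 ?cG2 //.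
move: uE; rewrite /= !in_cons !in_nil !orbF !negb_or => /andP[/andP[n12 n13] /andP[n23 _]].
rewrite !andbT n12 n13 n23 F1 F2 G12 !(neq_v1 iA) // !(neq_v1 iB) // !(neq_v1 iC) //.
Qed.

Lemma D_lemma p q r : good_pair H v1 q -> uniq [:: v1; p; q; r] ->
  [set v1; p; q] \in H -> [set v1; q; r] \in H ->
  (forall e, e \in H -> v1 \in e -> p \in e -> e = [set v1; p; q]) ->
  exists X1 X2, [/\ X1 \in H, X2 \in H, X1 != X2, v1 \notin X1 & v1 \notin X2] /\
    [&& p \in X1, q \in X1, p \in X2 & r \in X2].
Proof.
move=> /(good_unpack hK) [vq [x [y [e1 [e2 [e3 [e4 [e5 [w fe]]]]]]]]] u hA hB hp.
move: (u); rewrite /= !in_cons !in_nil !orbF !negb_or -!andbA => /and5P[vp vq' vr pq /and3P[pr qr _]].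
have inA : [set v1; q; p] \in [:: e1; e2; e3; e4; e5].
  by apply: fe; rewrite ?inE ?eqxx ?orbT // -(set3_perm v1 p q).2.1.
have inB : [set v1; q; r] \in [:: e1; e2; e3; e4; e5].
  by apply: fe; rewrite ?inE ?eqxx ?orbT.
have [f1 [f2 [f3 [f4 [f5 w']]]]] : exists f1 f2 f3 f4 f5, wit H v1 q p r f1 f2 f3 f4 f5.
  case: (third_in w inA) => pE; case: (third_in w inB) => rE.
  - by move: pr; rewrite pE rE eqxx.
  - by rewrite pE rE; exists e1, e2, e3, e4, e5.
  - by rewrite pE rE; exists e2, e1, e4, e3, e5; apply: wit_swap.
  - by move: pr; rewrite pE rE eqxx.
case: w' => xy xn yn un [/and5P[h1 h2 h3' h4 h5] /and4P[a1 a2 a3 a4] /and4P[b1 b2 b3 b4] /andP[c1 c2]].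
case: (uniq5P un) => n12 n13 n14 n15 [n23 n24 n25 [n34 n35 n45]].
exists f3, f5; split; last by rewrite b2 b1 c1 c2.
split => //.
- apply/negP => i3; move: n13; rewrite (hp _ h1 a1 a2) (hp _ h3' i3 b2) eqxx //.
- apply/negP => i5; have := hp _ h5 i5 c1 => e5E.
  by move: c2 vr pr qr; rewrite e5E !inE => /orP[/orP[]|] /eqP ->; rewrite eqxx.
Qed.

End F.

Lemma card3_not4 (T : finType) (e : {set T}) a b c d : #|e| = 3 -> uniq [:: a; b; c; d] ->
  a \in e -> b \in e -> c \in e -> d \in e -> False.
Proof.
move=> ce u ae be cee de.
have : #|[set a; b; c; d]| <= #|e|.
  apply: subset_leq_card; apply/subsetP => z; rewrite !inE.
  by case/orP=> [/orP[/orP[]|]|] /eqP->.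
by rewrite ce set4_card.
Qed.

Section P4.
Variable T : finType.
Variable H : {set {set T}}.
Hypothesis hK : ~ has_berge_K4 H.
Hypothesis h3 : is_3graph H.
Variable v1 p q r s : T.
Hypothesis hd : #|[set e in H | v1 \in e]| = 3.
Hypothesis hu : uniq [:: v1; p; q; r; s].
Hypothesis hA : [set v1; p; q] \in H.
Hypothesis hB : [set v1; q; r] \in H.
Hypothesis hC : [set v1; r; s] \in H.
Hypothesis hV : forall e, e \in H -> v1 \in e ->
  [\/ e = [set v1; p; q], e = [set v1; q; r] | e = [set v1; r; s]].
Hypothesis hNd : forall vi vj, in_Nd H v1 vi vj -> good_pair H vi vj.
Hypothesis hN : forall vk, in_N H v1 vk -> good_pair H v1 vk.

Lemma half_P4 : [set p; q; s] \in H.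
Proof.
case: (uniq5P hu) => vp vq vr vs [pq pr ps [qr qs rs]].
have inA : forall z, (z \in [set v1; p; q]) = [|| z == v1, z == p | z == q].
  by move=> z; rewrite !inE orbA.
have inB : forall z, (z \in [set v1; q; r]) = [|| z == v1, z == q | z == r].
  by move=> z; rewrite !inE orbA.
have inC : forall z, (z \in [set v1; r; s]) = [|| z == v1, z == r | z == s].
  by move=> z; rewrite !inE orbA.
have ABC : uniq [:: [set v1; p; q]; [set v1; q; r]; [set v1; r; s]].
  rewrite /= !in_cons in_nil !orbF !negb_or /= andbT -andbA; apply/and3P; split.
  - by apply/negP => /eqP/setP/(_ p); rewrite inA inB eqxx orbT (negbTE pq) (negbTE pr) eq_sym (negbTE vp).
  - by apply/negP => /eqP/setP/(_ p); rewrite inA inC eqxx orbT (negbTE ps) (negbTE pr) eq_sym (negbTE vp).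
  - by apply/negP => /eqP/setP/(_ q); rewrite inB inC eqxx orbT (negbTE qs) (negbTE qr) eq_sym (negbTE vq).
have hp : forall e, e \in H -> v1 \in e -> p \in e -> e = [set v1; p; q].
  move=> e he ie pe; case: (hV he ie) => eE //; move: pe; rewrite eE.
    by rewrite inB (eq_sym p) (negbTE vp) (negbTE pq) (negbTE pr).
  by rewrite inC (eq_sym p) (negbTE vp) (negbTE ps) (negbTE pr).
have hs : forall e, e \in H -> v1 \in e -> s \in e -> e = [set v1; s; r].
  move=> e he ie se; rewrite -(set3_perm v1 r s).2.1.
  case: (hV he ie) => eE //; move: se; rewrite eE.
    by rewrite inA (eq_sym s) (negbTE vs) (eq_sym s) (negbTE ps) (eq_sym s) (negbTE qs).
  by rewrite inB (eq_sym s) (negbTE vs) (eq_sym s) (negbTE qs) (eq_sym s) (negbTE rs).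
have gq : good_pair H v1 q.
  by apply: hN; split; [rewrite eq_sym | exists [set v1; p; q]; rewrite // !inE !eqxx ?orbT].
have gr : good_pair H v1 r.
  by apply: hN; split; [rewrite eq_sym | exists [set v1; q; r]; rewrite // !inE !eqxx ?orbT].
have u4 : uniq [:: v1; p; q; r] by neq_solve.
have [X1 [X2 [[hX1 hX2 X12 nX1 nX2] /and4P[pX1 qX1 pX2 rX2]]]] :=
  D_lemma hK gq u4 hA hB hp.
have u4' : uniq [:: v1; s; r; q] by neq_solve.
have hC' : [set v1; s; r] \in H by rewrite -(set3_perm v1 r s).2.1.
have hB' : [set v1; r; q] \in H by rewrite -(set3_perm v1 q r).2.1.
have [Y1 [Y2 [[hY1 hY2 Y12 nY1 nY2] /and4P[sY1 rY1 sY2 qY2]]]] :=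
  D_lemma hK gr u4' hC' hB' hs.
have iA : v1 \in [set v1; p; q] by rewrite !inE eqxx.
have iB : v1 \in [set v1; q; r] by rewrite !inE eqxx.
have iC : v1 \in [set v1; r; s] by rewrite !inE eqxx.
have pA : p \in [set v1; p; q] by rewrite !inE eqxx ?orbT.
have qA : q \in [set v1; p; q] by rewrite !inE eqxx ?orbT.
have qB : q \in [set v1; q; r] by rewrite !inE eqxx ?orbT.
have rB : r \in [set v1; q; r] by rewrite !inE eqxx ?orbT.
have rC : r \in [set v1; r; s] by rewrite !inE eqxx ?orbT.
have sC : s \in [set v1; r; s] by rewrite !inE eqxx ?orbT.
move: ABC; rewrite /= !in_cons in_nil !orbF !negb_or /= andbT => /andP[/andP[AB AC] BC].
have Nqr : forall W, W \in H -> v1 \notin W -> q \in W -> r \in W -> False.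
  move=> W hW nW qW rW.
  have pW : p \in W.
    apply: (@cover3 _ _ hK v1 q r p [set v1; q; r] [set v1; r; s] [set v1; p; q] X1 X2 W) => //.
    by neq_solve.
    by neq_solve.
  have sW : s \in W.
    apply: (@cover3 _ _ hK v1 q r s [set v1; p; q] [set v1; q; r] [set v1; r; s] Y2 Y1 W) => //.
    by neq_solve.
    by neq_solve.
    by rewrite eq_sym.
  apply: (@card3_not4 _ W p q r s) => //; first exact: h3.
  by neq_solve.
have gpq : good_pair H p q by apply: hNd; split; rewrite // eq_sym.
have pv : p != v1 by rewrite eq_sym.
have qv : q != v1 by rewrite eq_sym.
have [y [E1 [E2 [E3 [P [Q [[yv yp yq] [_ _ hE3 _ /and3P[_ _ iE3]]
    /and3P[_ _ yE3] [hP hQ PQ nP nQ] /and4P[pP yP qQ yQ]]]]]]]] :=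
  link_lemma hK hd gpq hA pv qv.
have ys : y = s.
  case: (hV hE3 iE3) => E3E; move: yE3; rewrite E3E !inE (negbTE yv) ?(negbTE yp) ?(negbTE yq) //=.
  by move=> /eqP yr; exfalso; apply: (Nqr Q) => //; rewrite -yr.
  by case/orP => /eqP // yr; exfalso; apply: (Nqr Q) => //; rewrite -yr.
rewrite ys in yP yQ.
have sX1 : s \in X1.
  apply: (@cover3 _ _ hK v1 p q s [set v1; p; q] [set v1; q; r] [set v1; r; s] P Q X1) => //.
  by neq_solve.
  by neq_solve.
by rewrite -(card3_eq (h3 hX1) pX1 qX1 sX1).
Qed.
End P4.

Lemma P4_C35 (T : finType) (H : {set {set T}}) (v1 p q r s : T) :
  ~ has_berge_K4 H -> is_3graph H ->
  #|[set e in H | v1 \in e]| = 3 ->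
  uniq [:: v1; p; q; r; s] ->
  [set v1; p; q] \in H -> [set v1; q; r] \in H -> [set v1; r; s] \in H ->
  (forall e, e \in H -> v1 \in e ->
    [\/ e = [set v1; p; q], e = [set v1; q; r] | e = [set v1; r; s]]) ->
  (forall vi vj, in_Nd H v1 vi vj -> good_pair H vi vj) ->
  (forall vk, in_N H v1 vk -> good_pair H v1 vk) ->
  exists v2 v3 v4 v5 : T, contains_C35_on H [set v1; v2; v3; v4; v5].
Proof.
move=> hK h3 hd hu hA hB hC hV hNd hN.
have pqs := half_P4 hK h3 hd hu hA hB hC hV hNd hN.
case: (uniq5P hu) => vp vq vr vs [pq pr ps [qr qs rs]].
have hu' : uniq [:: v1; s; r; q; p] by neq_solve.
have hA' : [set v1; s; r] \in H by rewrite -(set3_perm v1 r s).2.1.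
have hB' : [set v1; r; q] \in H by rewrite -(set3_perm v1 q r).2.1.
have hC' : [set v1; q; p] \in H by rewrite -(set3_perm v1 p q).2.1.
have hV' : forall e, e \in H -> v1 \in e ->
    [\/ e = [set v1; s; r], e = [set v1; r; q] | e = [set v1; q; p]].
  move=> e he ie; rewrite -(set3_perm v1 r s).2.1 -(set3_perm v1 q r).2.1 -(set3_perm v1 p q).2.1.
  by case: (hV e he ie) => ->; [apply: Or33 | apply: Or32 | apply: Or31].
have srp := half_P4 hK h3 hd hu' hA' hB' hC' hV' hNd hN.
exists q, p, s, r, v1, q, p, s, r; split => //; first by neq_solve.
rewrite -(set3_perm v1 p q).2.1 -(set3_perm p q s).1 -(set3_perm s r p).2.2.1.
rewrite -(set3_perm v1 r s).2.2.2.2 -(set3_perm v1 q r).2.2.1.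
by rewrite hA pqs srp hC hB.
Qed.

Lemma triangle (T : finType) (H : {set {set T}}) (v1 a b c : T) :
  ~ has_berge_K4 H -> is_3graph H ->
  #|[set e in H | v1 \in e]| = 3 ->
  uniq [:: v1; a; b; c] ->
  [set v1; a; b] \in H -> [set v1; b; c] \in H -> [set v1; a; c] \in H ->
  (forall e, e \in H -> v1 \in e ->
    [\/ e = [set v1; a; b], e = [set v1; b; c] | e = [set v1; a; c]]) ->
  (forall vi vj, in_Nd H v1 vi vj -> good_pair H vi vj) ->
  False.
Proof.
move=> hK h3 hd hu hA hB hC hV hNd.
move: (hu); rewrite /= !in_cons !in_nil !orbF !negb_or /= !andbT -!andbA.
case/and5P=> va vb vc ab /andP[ac bc].
have Vsub : forall e, e \in H -> v1 \in e -> forall z, z \in e -> [|| z == v1, z == a, z == b | z == c].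
  move=> e he ie z; case: (hV e he ie) => -> ; rewrite !inE -!orbA;
  by case/or3P => ->; rewrite ?orbT.
have link3 : forall u w t, uniq [:: v1; u; w; t] -> [set v1; u; w] \in H ->
    (forall z, [|| z == v1, z == a, z == b | z == c] -> [|| z == v1, z == u, z == w | z == t]) ->
    exists P Q, [/\ P \in H, Q \in H, P != Q, v1 \notin P & v1 \notin Q] /\
      [&& u \in P, t \in P, w \in Q & t \in Q].
  move=> u w t uu huw zz.
  move: (uu); rewrite /= !in_cons !in_nil !orbF !negb_or /= !andbT -!andbA.
  case/and5P=> vu vw vt uw /andP[ut wt].
  have g : good_pair H u w by apply: hNd; split; rewrite // eq_sym.
  have uv : u != v1 by rewrite eq_sym.
  have wv : w != v1 by rewrite eq_sym.
  have [y [E1 [E2 [E3 [P [Q [[yv yu yw] [_ _ hE3 _ /and3P[_ _ iE3]]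
    /and3P[_ _ yE3] [hP hQ PQ nP nQ] /and4P[uP yP wQ yQ]]]]]]]] :=
    link_lemma hK hd g huw uv wv.
  have yt : y = t.
    by move: (zz _ (Vsub _ hE3 iE3 _ yE3)); rewrite (negbTE yv) (negbTE yu) (negbTE yw) /= => /eqP.
  by exists P, Q; split => //; rewrite uP wQ -yt yP yQ.
have zzP : forall z, [|| z == v1, z == a, z == b | z == c] ->
   [&& [|| z == v1, z == b, z == c | z == a] & [|| z == v1, z == a, z == c | z == b]].
  by move=> z; case/or4P=> ->; rewrite ?orbT.
have [P1 [Q1 [[hP1 hQ1 PQ1 nP1 nQ1] /and4P[aP1 cP1 bQ1 cQ1]]]] := link3 a b c hu hA (fun z h => h).
have [P2 [Q2 [[hP2 hQ2 PQ2 nP2 nQ2] /and4P[bP2 aP2 cQ2 aQ2]]]] :=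
  link3 b c a (ltac:(neq_solve)) hB (fun z h => proj1 (andP (zzP z h))).
have [P3 [Q3 [[hP3 hQ3 PQ3 nP3 nQ3] /and4P[aP3 bP3 cQ3 bQ3]]]] :=
  link3 a c b (ltac:(neq_solve)) hC (fun z h => proj2 (andP (zzP z h))).
have iA : v1 \in [set v1; a; b] by rewrite !inE eqxx.
have iB : v1 \in [set v1; b; c] by rewrite !inE eqxx.
have iC : v1 \in [set v1; a; c] by rewrite !inE eqxx.
have aA : a \in [set v1; a; b] by rewrite !inE eqxx ?orbT.
have bA : b \in [set v1; a; b] by rewrite !inE eqxx ?orbT.
have bB : b \in [set v1; b; c] by rewrite !inE eqxx ?orbT.
have cB : c \in [set v1; b; c] by rewrite !inE eqxx ?orbT.
have aC : a \in [set v1; a; c] by rewrite !inE eqxx ?orbT.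
have cC : c \in [set v1; a; c] by rewrite !inE eqxx ?orbT.
have ABC : uniq [:: [set v1; a; b]; [set v1; b; c]; [set v1; a; c]].
  rewrite /= !in_cons in_nil !orbF !negb_or /= andbT -andbA; apply/and3P; split.
  - by apply/negP => /eqP/setP/(_ a); rewrite aA !inE (eq_sym a) (negbTE va) (negbTE ab) (negbTE ac).
  - apply/negP => /eqP/setP/(_ b); rewrite bA !inE => /esym.
    by case/orP=> [/orP[]|] /eqP E; [move: vb | move: ab | move: bc]; rewrite E eqxx.
  - by apply/negP => /eqP/setP/(_ a); rewrite !inE eqxx orbT (eq_sym a) (negbTE va) (negbTE ab) (negbTE ac).
move: ABC; rewrite /= !in_cons in_nil !orbF !negb_or /= andbT => /andP[/andP[AB AC] BC].
have abF : forall F, F \in H -> v1 \notin F -> a \in F -> b \in F -> c \in F.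
  move=> F hF nF aF bF.
  apply: (@cover3 _ _ hK v1 a b c [set v1; a; b] [set v1; b; c] [set v1; a; c] P1 Q1 F) => //.
  by neq_solve.
have acF : forall F, F \in H -> v1 \notin F -> a \in F -> c \in F -> b \in F.
  move=> F hF nF aF cF.
  apply: (@cover3 _ _ hK v1 a c b [set v1; a; c] [set v1; b; c] [set v1; a; b] P3 Q3 F) => //.
  by neq_solve.
  by neq_solve.
have bcF : forall F, F \in H -> v1 \notin F -> b \in F -> c \in F -> a \in F.
  move=> F hF nF bF cF.
  apply: (@cover3 _ _ hK v1 b c a [set v1; b; c] [set v1; a; c] [set v1; a; b] P2 Q2 F) => //.
  by neq_solve.
  by neq_solve.
have e1 := card3_eq (h3 _ hP1) aP1 (acF _ hP1 nP1 aP1 cP1) cP1 ab ac bc.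
have e2 := card3_eq (h3 _ hQ1) (bcF _ hQ1 nQ1 bQ1 cQ1) bQ1 cQ1 ab ac bc.
by move: PQ1; rewrite e1 e2 eqxx.
Qed.
Unset Implicit Arguments.

Theorem lemma3p2 (n : nat) (H : {set {set 'I_n}}) (v1 : 'I_n) :
  5 <= n ->
  berge_K4_saturated H ->
  (forall H' : {set {set 'I_n}}, berge_K4_saturated H' -> #|H| <= #|H'|) ->
  hdeg H v1 = 3 ->
  (forall vi vj, in_Nd H v1 vi vj -> good_pair H vi vj) ->
  (forall vk, in_N H v1 vk -> good_pair H v1 vk) ->
  exists v2 v3 v4 v5 : 'I_n,
    contains_C35_on H [set v1; v2; v3; v4; v5].
Proof.
move=> _ [h3 [hK _]] _ hd hNd hN.
rewrite /hdeg in hd.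
have [A] : exists A, A \in [set e in H | v1 \in e].
  by apply/card_gt0P; rewrite hd.
rewrite inE => /andP[hA iA].
have [a0 [b0 [ab0 av0 bv0 AE0]]] := card3_split (h3 _ hA) iA.
have [a [b [B [[AE ab av bv] [hB iB bB BA]]]]] : exists a b B,
    [/\ A = [set v1; a; b], a != b, a != v1 & b != v1] /\
    [/\ B \in H, v1 \in B, b \in B & B != A].
  have hA0 : [set v1; a0; b0] \in H by rewrite -AE0.
  have g : good_pair H a0 b0 by apply: hNd; split; rewrite // eq_sym.
  have [y [E1 [E2 [E3 [P [Q [_ [hE1 hE2 _ uE /and3P[i1 i2 _]] /and3P[a1 b2 _] _ _]]]]]]] :=
    link_lemma hK hd g hA0 av0 bv0.
  have [E1A|E1A] := eqVneq E1 A.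
    exists a0, b0, E2; split => //; split => //.
    by move: uE; rewrite /= !in_cons E1A eq_sym => /andP[/norP[]].
  exists b0, a0, E1; split; split => //; last by rewrite eq_sym.
  by rewrite AE0 (set3_perm v1 a0 b0).2.1.
clear AE0 ab0 av0 bv0 a0 b0.
have vb : v1 != b by rewrite eq_sym.
have va : v1 != a by rewrite eq_sym.
have [c [cv cb BE]] := card3_split2 (h3 _ hB) iB bB vb.
have ca : c != a.
  apply/eqP => E; move: BA; rewrite BE AE E -(set3_perm v1 a b).2.1 eqxx //.
have [C [hC iC CA CB]] : exists C, [/\ C \in H, v1 \in C, C != A & C != B].
  case: (pickP [pred C | [&& C \in H, v1 \in C, C != A & C != B]]) => [C /and4P[? ? ? ?]|none].
    by exists C.
  have : [set e in H | v1 \in e] \subset [set A; B].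
    apply/subsetP => e; rewrite inE => /andP[he ie]; move: (none e) => /=.
    rewrite he ie /= !inE => /negbT; rewrite negb_and !negbK.
    by case/orP => ->; rewrite ?orbT.
  move/subset_leq_card; rewrite hd cards2.
  by case: (A != B).
have hV : forall e, e \in H -> v1 \in e -> [\/ e = A, e = B | e = C].
  move=> e he ie.
  have [->|eA] := eqVneq e A; first by constructor 1.
  have [->|eB] := eqVneq e B; first by constructor 2.
  have [->|eC] := eqVneq e C; first by constructor 3.
  exfalso; apply: (@four_V _ _ v1 hd A B C e) => //.
  by rewrite /= !in_cons in_nil !orbF !negb_or (eq_sym A) BA (eq_sym A) CA (eq_sym B) CB (eq_sym A) eA (eq_sym B) eB (eq_sym C) eC.
have bC : b \notin C.
  apply/negP => bC.
  have bA : b \in A by rewrite AE !inE eqxx ?orbT.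
  have g : good_pair H v1 b by apply: hN; split => //; exists A; rewrite // iA bA.
  have [_ [x [y [e1 [e2 [e3 [e4 [e5 [w fe]]]]]]]]] := good_unpack hK g.
  have [w' [wv wb CE]] := card3_split2 (h3 _ hC) iC bC vb.
  have wa : w' != a by apply/eqP => E; move: CA; rewrite CE AE E -(set3_perm v1 a b).2.1 eqxx.
  have wc : w' != c by apply/eqP => E; move: CB; rewrite CE BE E eqxx.
  have inA : [set v1; b; a] \in [:: e1; e2; e3; e4; e5].
    by apply: fe; rewrite -?(set3_perm v1 a b).2.1 -?AE // !inE eqxx ?orbT.
  have inB : [set v1; b; c] \in [:: e1; e2; e3; e4; e5].
    by apply: fe; rewrite -?BE // !inE eqxx ?orbT.
  have inC : [set v1; b; w'] \in [:: e1; e2; e3; e4; e5].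
    by apply: fe; rewrite -?CE // !inE eqxx ?orbT.
  case: (third_in w inA) => aE; case: (third_in w inB) => cE; case: (third_in w inC) => wE;
  by [move: ca; rewrite aE cE eqxx | move: wa; rewrite aE wE eqxx | move: wc; rewrite wE cE eqxx].
have vc : v1 != c by rewrite eq_sym.
have [aC|aC] := boolP (a \in C); have [cC|cC] := boolP (c \in C).
-
  exfalso.
  have CE : C = [set v1; a; c] by apply: card3_eq => //; [exact: h3 | rewrite eq_sym].
  apply: (@triangle _ H v1 a b c hK h3 hd) => //.
  + by neq_solve.
  + by rewrite -AE.
  + by rewrite -BE.
  + by rewrite -CE.
  + by move=> e he ie; rewrite -AE -BE -CE; apply: hV.
-
  have [w' [wv wa CE]] := card3_split2 (h3 _ hC) iC aC va.
  have wb : w' != b by apply/eqP => E; move: bC; rewrite CE E !inE eqxx ?orbT.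
  have wc : w' != c by apply/eqP => E; move: cC; rewrite CE E !inE eqxx ?orbT.
  apply: (@P4_C35 _ H v1 c b a w' hK h3 hd) => //.
  + by neq_solve.
  + by rewrite -(set3_perm v1 b c).2.1 -BE.
  + by rewrite -(set3_perm v1 a b).2.1 -AE.
  + by rewrite -CE.
  + move=> e he ie; rewrite -(set3_perm v1 b c).2.1 -BE -(set3_perm v1 a b).2.1 -AE -CE.
    by case: (hV e he ie) => ->; [apply: Or32 | apply: Or31 | apply: Or33].
-
  have [w' [wv wc CE]] := card3_split2 (h3 _ hC) iC cC vc.
  have wb : w' != b by apply/eqP => E; move: bC; rewrite CE E !inE eqxx ?orbT.
  have wa : w' != a by apply/eqP => E; move: aC; rewrite CE E !inE eqxx ?orbT.
  apply: (@P4_C35 _ H v1 a b c w' hK h3 hd) => //.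
  + by neq_solve.
  + by rewrite -AE.
  + by rewrite -BE.
  + by rewrite -CE.
  + by move=> e he ie; rewrite -AE -BE -CE; apply: hV.
-
  exfalso.
  have [u [w' [uw uv wv CE]]] := card3_split (h3 _ hC) iC.
  have uC : u \in C by rewrite CE !inE eqxx ?orbT.
  have wC : w' \in C by rewrite CE !inE eqxx ?orbT.
  have noAB : forall z, z \in C -> z != v1 -> forall E, E \in H -> v1 \in E -> z \in E -> E = C.
    move=> z zC zv E hE iE zE; case: (hV E hE iE) => EE //; move: zE; rewrite EE.
      rewrite AE !inE (negbTE zv) /= => /orP[] /eqP zE.
        by move: aC; rewrite -zE zC.
      by move: bC; rewrite -zE zC.
    rewrite BE !inE (negbTE zv) /= => /orP[] /eqP zE.
      by move: bC; rewrite -zE zC.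
    by move: cC; rewrite -zE zC.
  have g : good_pair H u w' by apply: hNd; split; rewrite // -CE.
  have [y [E1 [E2 [E3 [P [Q [_ [hE1 hE2 _ uE /and3P[i1 i2 _]] /and3P[u1 w2 _] _ _]]]]]]] :=
    link_lemma hK hd g (etrans (congr1 (fun X => X \in H) (esym CE)) hC) uv wv.
  move: uE; rewrite /= !in_cons (noAB u uC uv E1 hE1 i1 u1) (noAB w' wC wv E2 hE2 i2 w2) eqxx.
  by [].
Qed.
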